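(* Let $b\geq2$ and even, $k\leq n-2$ and $\mathbf s=s_1s_2\ldots s_k$. If $\mathbf t$ is the first sequence in $\mathbf s\,|\,R_n(b)$ when this set is listed in co-Reflected Gray Code Order, then $\mathbf t$ has one of the following forms: 1. $\mathbf t=\mathbf sM0\ldots0$ if $U_{k+1}$ is odd and $M$ is even, 2. $\mathbf t=\mathbf sM(M+1)0\ldots0$ if $U_{k+1}$ is odd and $M$ is odd, 3. $\mathbf t=\mathbf s0\ldots0$ if $U_{k+1}$ is even, where $M=\min\{b,\max\{s_i\}_{i=1}^k+1\}$ and $U_{k+1}=\sum_{i=1}^k[s_i\neq0 \text{ and } s_i \text{ is even}]$.
   Context: A restricted growth function of length $n$ is an integer sequence $s_1s_2\ldots s_n$ with $s_1=0$ and $0\leq s_{i+1}\leq \max\{s_j\}_{j=1}^i+1$ for $1\leq i\leq n-1$; $R_n$ is the set of these, and for $b\geq1$, $R_n(b)=\{s_1\ldots s_n\in R_n : \max\{s_i\}_{i=1}^n\leq b\}$. For a sequence $\mathbf u$, $\mathbf u\,|\,S$ denotes the subset of $S$ of sequences having prefix $\mathbf u$. The co-Reflected Gray Code Order on $\{0,1,\ldots,m-1\}^n$ ($m\geq2$) is defined by: $s_1\ldots s_n$ is less than $t_1\ldots t_n$ if, for the position $k$ with $s_i=t_i$ ($1\leq i\leq k-1$) and $s_k\neq t_k$, either $U_k$ is even and $s_k<t_k$, or $U_k$ is odd and $s_k>t_k$, where $U_k=|\{i\in\{1,\ldots,k-1\}: s_i\neq0,\ s_i \text{ even}\}|$. $[P]$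 denotes the Iverson bracket (1 if $P$ is true, 0 otherwise). *)

(* Defs.v *)
(* Sequences are `seq nat`, positions 1-based in the paper,
   0-based here (nth 0 s i = s_{i+1}). *)
From mathcomp Require Import all_boot.
Set Implicit Arguments. Unset Strict Implicit. Unset Printing Implicit Defensive.

Definition seqmax (s : seq nat) : nat := foldr maxn 0 s.

Definition is_rgf (n : nat) (s : seq nat) : bool :=
  [&& size s == n, nth 0 s 0 == 0 &
      [forall i : 'I_n, (0 < i) ==> (nth 0 s i <= (seqmax (take i s)).+1)]].

Definition in_Rnb (n b : nat) (s : seq nat) : bool :=
  is_rgf n s && (seqmax s <= b).

(* u | S : the sequences of S having prefix u *)
Definition has_prefix (u s : seq nat) : bool := take (size u) s == u.

(* U_{k+1} = number of i in {1..k} with s_i <> 0 and s_i even *)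
Definition Ucount (s : seq nat) (k : nat) : nat :=
  count (fun x => (x != 0) && ~~ odd x) (take k s).

(* The first differing position is (0-based) k, i.e. paper position k+1, and
   U_{k+1} counts the nonzero even entries among the first k entries. *)
Definition corgc_lt (s t : seq nat) : Prop :=
  size s = size t /\
  exists k, k < size s /\ take k s = take k t /\ nth 0 s k <> nth 0 t k /\
    ((~~ odd (Ucount s k) /\ nth 0 s k < nth 0 t k) \/
     (odd (Ucount s k) /\ nth 0 s k > nth 0 t k)).

Definition first_in_prefix_class (n b : nat) (u t : seq nat) : Prop :=
  in_Rnb n b t /\ has_prefix u t /\
  forall v, in_Rnb n b v -> has_prefix u v -> v <> t -> corgc_lt t v.

(* Main.v *)
Require Import Defs.
From mathcomp Require Import all_boot.
From mathcomp Require Import zify.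

Definition Pe (x : nat) : bool := (x != 0) && ~~ odd x.

Lemma seqmax_cat a c : seqmax (a ++ c) = maxn (seqmax a) (seqmax c).
Proof. elim: a => [|x a IH] /=; first by rewrite max0n. by rewrite /seqmax /= -/(seqmax _) IH maxnA. Qed.

Lemma nth_le_seqmax v i : nth 0 v i <= seqmax v.
Proof. elim: v i => [|x v IH] [|i] //=; rewrite /seqmax /= -/(seqmax _) ?leq_maxl //.
  exact: leq_trans (IH i) (leq_maxr _ _). Qed.

Lemma seqmax_cons x l : seqmax (x :: l) = maxn x (seqmax l).
Proof. by []. Qed.

Lemma seqmax_nseq N : seqmax (nseq N 0) = 0.
Proof. by elim: N => //= N IH; rewrite /seqmax /= -/(seqmax _) IH. Qed.

Lemma count_take_nseq x N : count Pe (take x (nseq N 0)) = 0.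
Proof. by elim: N x => [|N IH] [|x] //=; rewrite IH. Qed.

Lemma rgf_ext n s r r' : is_rgf n (s ++ r) -> size r' = size r ->
  (0 < size s \/ nth 0 r' 0 = 0) ->
  (forall d, d < size r' -> nth 0 r' d <= (maxn (seqmax s) (seqmax (take d r'))).+1) ->
  is_rgf n (s ++ r').
Proof.
move=> /and3P[/eqP sz h0 /forallP hf] szr h0' hd.
apply/and3P; split.
- by rewrite size_cat szr -size_cat sz.
- case: h0' => [sp|e]; first by rewrite nth_cat sp; rewrite nth_cat sp in h0.
  case: s sz h0 hd {hf} => [|x s] //= _ _ _. by rewrite e.
- apply/forallP => i; apply/implyP => ipos.
  have := hf i; rewrite ipos /=.
  case: (ltnP i (size s)) => iS.
  + by rewrite !take_cat !nth_cat iS.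
  + move=> _. rewrite take_cat nth_cat ltnNge iS /= seqmax_cat.
    apply: hd. have := ltn_ord i. have := size_cat s r. lia.
Qed.

Lemma notlt_c n b s r' v : in_Rnb n b v -> has_prefix s v -> size s + size r' = n ->
  (forall d x, d < size r' -> x <= b ->
     (0 < size s + d -> x <= (maxn (seqmax s) (seqmax (take d r'))).+1) ->
     x <> nth 0 r' d ->
     let u := count Pe s + count Pe (take d r') in
     ~ ((~~ odd u /\ x < nth 0 r' d) \/ (odd u /\ x > nth 0 r' d))) ->
  ~ corgc_lt v (s ++ r').
Proof.
move=> /andP[/and3P[/eqP szv v0 /forallP vf] vb] /eqP pre szn H.
move=> [_ [j [jn [tk [ne cond]]]]].
have jk : size s <= j.
  rewrite leqNgt; apply/negP => jlt. apply ne.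
  have: nth 0 (take (size s) v) j = nth 0 (take (size s) (s++r')) j by rewrite pre take_size_cat.
  by rewrite !nth_take.
set d := j - size s.
have ej : j = size s + d by rewrite subnKC.
have tkj : take j v = s ++ take d r'.
  by rewrite tk take_cat ltnNge jk.
have dlt : d < size r' by rewrite /d; lia.
have U : Ucount v j = count Pe s + count Pe (take d r').
  by rewrite /Ucount tkj count_cat.
have E : nth 0 (s++r') j = nth 0 r' d by rewrite nth_cat ltnNge jk.
rewrite U E in cond. rewrite E in ne.
apply: (H d (nth 0 v j) dlt) => //.
- exact: leq_trans (nth_le_seqmax v j) vb.
- move=> jpos. have jn' : j < n by lia.
  have jp : 0 < j by lia.
  have := vf (Ordinal jn'); rewrite /= jp /= tkj seqmax_cat. done.
Qed.

Lemma finish n b s t r' : first_in_prefix_class n b s t -> size s + size r' = n ->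
  in_Rnb n b (s ++ r') ->
  (forall d x, d < size r' -> x <= b ->
     (0 < size s + d -> x <= (maxn (seqmax s) (seqmax (take d r'))).+1) ->
     x <> nth 0 r' d ->
     let u := count Pe s + count Pe (take d r') in
     ~ ((~~ odd u /\ x < nth 0 r' d) \/ (odd u /\ x > nth 0 r' d))) ->
  t = s ++ r'.
Proof.
move=> [tin [tpre tmin]] sz cin H.
case: (eqVneq t (s ++ r')) => // ne; exfalso.
have hp : has_prefix s (s ++ r') by rewrite /has_prefix take_size_cat.
have := tmin _ cin hp (fun e => (negP ne) (introT eqP (esym e))).
exact: (@notlt_c n b s r' t tin tpre sz H).
Qed.

Theorem proposition4 (b n : nat) (s t : seq nat) :
  2 <= b -> ~~ odd b -> size s + 2 <= n ->
  first_in_prefix_class n b s t ->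
  let k := size s in
  let M := minn b (seqmax s).+1 in
  (odd (Ucount s k) -> ~~ odd M -> t = s ++ M :: nseq (n - k - 1) 0) /\
  (odd (Ucount s k) -> odd M -> t = s ++ M :: M.+1 :: nseq (n - k - 2) 0) /\
  (~~ odd (Ucount s k) -> t = s ++ nseq (n - k) 0).
Proof.
move=> b2 bev szn F k M.
have F' := F. case: F' => [/andP[trgf tb] [/eqP tpre _]].
set r := drop k t.
have et : t = s ++ r by rewrite -{1}(cat_take_drop k t) tpre.
have szt : size t = n by case/and3P: trgf => /eqP.
have szr : size r = n - k by rewrite /r size_drop szt.
have mb : seqmax s <= b.
  by apply: leq_trans tb; rewrite et seqmax_cat leq_maxl.
rewrite et in trgf.
have Uc : Ucount s k = count Pe s by rewrite /Ucount take_size.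
rewrite Uc.
have Mb : M <= b by rewrite /M geq_minl.
have Mm : M <= (seqmax s).+1 by rewrite /M geq_minr.
split; [|split].
- move=> Uo Me.
  have kp : 0 < k by move: Uo; rewrite /k; case: (s).
  apply: (@finish n b s t _ F); first by rewrite /= size_nseq /k; lia.
  + apply/andP; split.
    * apply: (@rgf_ext n s r _ trgf); [by rewrite /= size_nseq szr; lia | by left |].
      move=> [|d] _ /=; first by rewrite maxn0.
      by rewrite nth_nseq; case: ifP.
    * by rewrite seqmax_cat seqmax_cons seqmax_nseq maxn0 geq_max mb Mb.
  + have PM : Pe M = true.
      rewrite /Pe Me andbT -lt0n /M. have := leq_min 1 b (seqmax s).+1. rewrite ltnS leq0n. lia.
    move=> [|d] x _ xb /=.
    * rewrite !addn0 maxn0 => /(_ kp) xm _.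
      have xM : x <= M by rewrite /M leq_min xb xm.
      case => [[/negP //]|[_]]. by rewrite ltnNge xM.
    * move=> _ _. rewrite PM count_take_nseq addn0 addn1 /= Uo /=.
      rewrite nth_nseq; case: ifP => _; rewrite ltn0; by case=> [[]|[]].
- move=> Uo Mo.
  have kp : 0 < k by move: Uo; rewrite /k; case: (s).
  have Mnb : M != b by apply/eqP => e; rewrite e in Mo; rewrite Mo in bev.
  have Md : M = (seqmax s).+1 /\ M < b.
    have : M = minn b (seqmax s).+1 by []. move: Mnb => /eqP. lia.
  case: Md => Md Mlb.
  have PM : Pe M = false by rewrite /Pe Mo andbF.
  have PM1 : Pe M.+1 = true by rewrite /Pe /= Mo.
  apply: (@finish n b s t _ F); first by rewrite /= size_nseq /k; lia.
  + apply/andP; split.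
    * apply: (@rgf_ext n s r _ trgf); [by rewrite /= size_nseq szr; lia | by left |].
      move=> [|[|d]] _ /=; first by rewrite maxn0.
      - rewrite maxn0 Md. lia.
      - by rewrite nth_nseq; case: ifP.
    * rewrite seqmax_cat !seqmax_cons seqmax_nseq maxn0 geq_max mb /=. lia.
  + move=> [|[|d]] x _ xb /=.
    * rewrite !addn0 maxn0 => /(_ kp) xm _.
      have xM : x <= M by rewrite /M leq_min xb xm.
      case => [[/negP //]|[_]]. by rewrite ltnNge xM.
    * rewrite PM /= !addn0 maxn0 => xm _.
      have h : 0 < size s + 1 by rewrite addn1.
      have xM : x <= M.+1 by move: (xm h); rewrite Md; lia.
      case => [[/negP //]|[_]]. by rewrite ltnNge xM.
    * move=> _ _. rewrite PM PM1 count_take_nseq add0n addn0 addn1 /= Uo /=.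
      rewrite nth_nseq; case: ifP => _; rewrite ltn0; by case=> [[]|[]].
- move=> Ue.
  apply: (@finish n b s t _ F); first by rewrite size_nseq /k; lia.
  + apply/andP; split.
    * apply: (@rgf_ext n s r _ trgf); [by rewrite size_nseq szr | right; by rewrite nth_nseq; case: ifP |].
      move=> d _. by rewrite nth_nseq; case: ifP.
    * by rewrite seqmax_cat seqmax_nseq maxn0.
  + move=> d x _ xb _ _ /=. rewrite count_take_nseq addn0 nth_nseq.
    case: ifP => _; rewrite ltn0; case=> [[]|[]] //; by rewrite (negbTE Ue).
Qed.
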